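(* Let $f_1,f_2:\mathbb R^d\to\mathbb R$ be convex with $\nabla f_i$ globally Lipschitz continuous with modulus $L_i>0$ ($i=1,2$), let $f_3:\mathbb R^d\to\mathbb R\cup\{+\infty\}$ be proper and lower semicontinuous, and assume $\varphi:=f_1+f_2+f_3$ has a nonempty set of minimizers. Let $\lambda\in(0,2)$, $\underline\alpha:=\frac{2\lambda-3+\sqrt{9-4\lambda}}{2}$, $\alpha\in(\underline\alpha,1)$, and let $\gamma\in\Gamma$. Then for the sequences $(z_1^k,z_2^k)_k$ generated by the relaxed Ryu splitting method there exists $M=M(\gamma)>0$ such that for all $k\ge0$, $$\varphi_\gamma^{\mathrm{Ryu}}(z_1^k,z_2^k)\ge\varphi_\gamma^{\mathrm{Ryu}}(z_1^{k+1},z_2^{k+1})+M\big(\|z_1^{k+1}-z_1^k\|^2+\|z_2^{k+1}-z_2^k\|^2\big).$$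
   Context: For $h:\mathbb R^d\to\mathbb R\cup\{+\infty\}$ and $\gamma>0$, $\mathrm{prox}_{\gamma h}(z):=\operatorname{argmin}_{y}\{h(y)+\frac{1}{2\gamma}\|y-z\|^2\}$. The relaxed Ryu splitting method: given $z_1^0,z_2^0\in\mathbb R^d$, for $k\ge0$, $x_1^k=\mathrm{prox}_{\gamma f_1}(z_1^k)$, $x_2^k=\mathrm{prox}_{\frac{\gamma}{\alpha}f_2}(\frac{z_2^k}{\alpha}+x_1^k)$, $x_3^k\in\mathrm{prox}_{\gamma f_3}(x_1^k-z_1^k+x_2^k-z_2^k)$, $z_1^{k+1}=z_1^k+\lambda(x_3^k-x_1^k)$, $z_2^{k+1}=z_2^k+\lambda(x_3^k-x_2^k)$. Relaxed Ryu envelope: with $\gamma_1=\gamma/\alpha$, $\gamma_2=\gamma/(1-\alpha)$, and for $(z_1,z_2)$, $x_1=\mathrm{prox}_{\gamma f_1}(z_1)$, $x_2=\mathrm{prox}_{\frac{\gamma}{\alpha}f_2}(\frac{z_2}{\alpha}+x_1)$, $\varphi_\gamma^{\mathrm{Ryu}}(z_1,z_2):=\min_{y}\{f_3(y)+\sum_{i=1}^2[f_i(x_i)+\langle y-x_i,\nabla f_i(x_i)\rangle+\frac{1}{2\gamma_i}\|y-x_i\|^2]\}$. Stepsize set: fix $\epsilon_1\in I_1:=\big(\frac{\alpha}{2\alpha-\lambda},\frac{2-\lambda}{1-\alpha}\big)$ and $\epsilon_2\in I_2:=\big(\frac{\alpha L_2}{\lambda},+\infty\big)$, and set $\bar\gamma_0:=\frac{\lambda}{2L_1}$,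 $\bar\gamma_1:=\frac{\lambda}{2L_2}-\frac{\alpha}{2\epsilon_2}$, $\bar\gamma_2:=\frac{\alpha(2-\lambda-(1-\alpha)\epsilon_1)}{\alpha\epsilon_2+2(1-\alpha)L_1}$, $\bar\gamma_3:=\frac{(1-\alpha)(\epsilon_1(2\alpha-\lambda)-\alpha)}{2\alpha L_2\epsilon_1}$, and $\Gamma:=(0,\min\{\bar\gamma_0,\bar\gamma_1\}]\cap\big(0,\min\{\bar\gamma_2,\bar\gamma_3,\frac{1}{L_1+L_2}\}\big)$. *)

(* Defs.v *)
From HB Require Import structures.
From mathcomp Require Import all_boot all_order all_algebra.
From mathcomp Require Import all_classical all_reals all_analysis.
Set Implicit Arguments. Unset Strict Implicit. Unset Printing Implicit Defensive.
Import Order.TTheory GRing.Theory Num.Theory.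
Import numFieldNormedType.Exports.
Local Open Scope classical_set_scope.
Local Open Scope ring_scope.

Section Defs.
Variables (R : realType) (d : nat).
Notation vec := 'rV[R]_d.

Definition dotv (u v : vec) : R := \sum_(i < d) u ord0 i * v ord0 i.
Definition sqnorm (u : vec) : R := dotv u u.
Definition enorm (u : vec) : R := Num.sqrt (sqnorm u).

Definition convex_fun (f : vec -> R) : Prop :=
  forall (x y : vec) (t : R), 0 <= t <= 1 ->
    f (t *: x + (1 - t) *: y) <= t * f x + (1 - t) * f y.

Definition is_gradient (f : vec -> R) (g : vec -> vec) : Prop :=
  forall x : vec, differentiable f x /\
    (('d f x : vec -> R) = fun h => dotv (g x) h).

Definition lipschitz_mod (g : vec -> vec) (L : R) : Prop :=
  forall x y : vec, enorm (g x - g y) <= L * enorm (x - y).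

Definition proper_fun (f : vec -> \bar R) : Prop :=
  (forall x, f x != -oo%E) /\ (exists x, f x != +oo%E).

Definition prox (h : vec -> \bar R) (gam : R) (z : vec) : set vec :=
  [set y | forall w : vec,
     (h y + (sqnorm (y - z) / (2 * gam))%:E <= h w + (sqnorm (w - z) / (2 * gam))%:E)%E].

(* For the single-valued proxes of f1, f2 (unique minimizer): a chosen element *)
Definition prox_pt (h : vec -> R) (gam : R) (z : vec) : vec :=
  xget z (prox (fun x => (h x)%:E) gam z).

(* relaxed Ryu envelope (the "min" is written as an infimum over y) *)
Definition ryu_env (f1 f2 : vec -> R) (f3 : vec -> \bar R) (g1 g2 : vec -> vec)
    (gam alpha : R) (z1 z2 : vec) : \bar R :=
  let gam1 := gam / alpha in
  let gam2 := gam / (1 - alpha) in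
  let x1 := prox_pt f1 gam z1 in
  let x2 := prox_pt f2 (gam / alpha) (alpha^-1 *: z2 + x1) in
  ereal_inf [set (f3 y
      + (f1 x1 + dotv (y - x1) (g1 x1) + sqnorm (y - x1) / (2 * gam1)
       + (f2 x2 + dotv (y - x2) (g2 x2) + sqnorm (y - x2) / (2 * gam2)))%:E)%E
    | y in [set: vec]].

Definition stepsize_set (L1 L2 lam alpha eps1 eps2 : R) : set R :=
  let g0 := lam / (2 * L1) in
  let g1 := lam / (2 * L2) - alpha / (2 * eps2) in
  let g2 := alpha * (2 - lam - (1 - alpha) * eps1) /
            (alpha * eps2 + 2 * (1 - alpha) * L1) in
  let g3 := (1 - alpha) * (eps1 * (2 * alpha - lam) - alpha) /
            (2 * alpha * L2 * eps1) in
  [set gam | 0 < gam /\ gam <= Num.min g0 g1 /\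
             gam < Num.min (Num.min g2 g3) (1 / (L1 + L2))].

End Defs.

(* Main.v *)
Require Import Defs.
From HB Require Import structures.
From mathcomp Require Import all_boot all_order all_algebra.
From mathcomp Require Import all_classical all_reals all_analysis.
From mathcomp Require Import ring lra.
Import Order.TTheory GRing.Theory Num.Theory.
Import numFieldNormedType.Exports.
Local Open Scope classical_set_scope.
Local Open Scope ring_scope.
Set Implicit Arguments. Unset Strict Implicit.


Section Vec.
Variables (R : realType) (d : nat).
Local Notation vec := 'rV[R]_d.
Implicit Types u v w : vec.

Lemma dotvC u v : dotv u v = dotv v u.
Proof. by apply: eq_bigr => i _; rewrite mulrC. Qed.

Lemma dotvDl u v w : dotv (u + v) w = dotv u w + dotv v w.
Proof. by rewrite /dotv -big_split; apply: eq_bigr => i _; rewrite !mxE mulrDl. Qed.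

Lemma dotvDr u v w : dotv w (u + v) = dotv w u + dotv w v.
Proof. by rewrite dotvC dotvDl !(dotvC w). Qed.

Lemma dotvZl (a : R) u v : dotv (a *: u) v = a * dotv u v.
Proof. by rewrite /dotv mulr_sumr; apply: eq_bigr => i _; rewrite !mxE mulrA. Qed.

Lemma dotvZr (a : R) u v : dotv u (a *: v) = a * dotv u v.
Proof. by rewrite dotvC dotvZl dotvC. Qed.

Lemma dotvNl u v : dotv (- u) v = - dotv u v.
Proof. by rewrite -scaleN1r dotvZl mulN1r. Qed.

Lemma dotvNr u v : dotv u (- v) = - dotv u v.
Proof. by rewrite dotvC dotvNl dotvC. Qed.

Lemma dotvBl u v w : dotv (u - v) w = dotv u w - dotv v w.
Proof. by rewrite dotvDl dotvNl. Qed.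

Lemma dotvBr u v w : dotv w (u - v) = dotv w u - dotv w v.
Proof. by rewrite dotvDr dotvNr. Qed.

Lemma sqnorm_ge0 u : 0 <= sqnorm u.
Proof. by apply: sumr_ge0 => i _; rewrite -expr2 sqr_ge0. Qed.

Lemma sqnorm_eq0 u : sqnorm u = 0 -> u = 0.
Proof.
move=> /eqP; rewrite /sqnorm /dotv psumr_eq0; last by move=> i _; rewrite -expr2 sqr_ge0.
move=> /allP H; apply/rowP => i; rewrite mxE.
have := H i (mem_index_enum i); rewrite -expr2 sqrf_eq0 => /eqP.
by have -> : ord0 = (0 : 'I_1) by apply/val_inj.
Qed.

Lemma enorm_ge0 u : 0 <= enorm u.
Proof. exact: sqrtr_ge0. Qed.

Lemma enorm_sq u : enorm u ^+ 2 = sqnorm u.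
Proof. by rewrite sqr_sqrtr // sqnorm_ge0. Qed.

Lemma aux_pos_le (a K : R) : (forall t : R, 0 < t -> t * a <= K) -> a <= 0.
Proof.
move=> H; rewrite leNgt; apply/negP => a0.
have K0 : 0 <= K by have := H 1 ltr01; rewrite mul1r; lra.
have t0 : 0 < (K + 1) / a by rewrite divr_gt0 // ltr_wpDl.
have := H _ t0; rewrite mulrAC -mulrA mulfV ?gt_eqF // mulr1; lra.
Qed.

Lemma cs_zero u v : enorm u = 0 -> dotv u v <= 0.
Proof.
move=> u0.
have key (t : R) : 0 <= t ^+ 2 * sqnorm u - 2 * t * dotv u v + sqnorm v.
  have := sqnorm_ge0 (t *: u - v).
  rewrite /sqnorm !(dotvBl, dotvBr, dotvZl, dotvZr) (dotvC v u).
  by move=> h; rewrite expr2; lra.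
apply: (@aux_pos_le (dotv u v) (sqnorm v)) => t t0.
have := key t; rewrite -enorm_sq u0 => h.
have z : (0:R) ^+ 2 = 0 by rewrite expr2 mul0r.
rewrite z mulr0 in h; have := sqnorm_ge0 v; nra.
Qed.

Lemma cauchy_schwarz u v : dotv u v <= enorm u * enorm v.
Proof.
have key (t : R) : 0 <= t ^+ 2 * sqnorm u - 2 * t * dotv u v + sqnorm v.
  have := sqnorm_ge0 (t *: u - v).
  rewrite /sqnorm !(dotvBl, dotvBr, dotvZl, dotvZr) (dotvC v u).
  by move=> h; rewrite expr2; lra.
have nu := enorm_ge0 u; have nv := enorm_ge0 v.
case: (ltrgt0P (enorm u)) nu => // [up _|u0 _]; last first.
  by rewrite u0 mul0r; apply: cs_zero.
case: (ltrgt0P (enorm v)) nv => // [vp _|v0 _]; last first.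
  by rewrite v0 mulr0 dotvC; apply: cs_zero.
set a := enorm u; set b := enorm v.
have h := key (b / a).
rewrite -!enorm_sq -/a -/b in h.
have sa : b / a * a = b by rewrite divfK // gt_eqF.
have e1 : (b / a) ^+ 2 * a ^+ 2 = b ^+ 2 by rewrite -exprMn sa.
rewrite e1 in h.
have h2 : b / a * dotv u v <= b ^+ 2 by lra.
have h3 : b * dotv u v <= a * b ^+ 2.
  have := ler_wpM2l (ltW up) h2; by rewrite mulrA (mulrC a) sa.
rewrite expr2 in h3.
have h4 : b * (dotv u v - a * b) <= 0 by nra.
rewrite pmulr_rle0 // in h4; lra.
Qed.

Lemma enormZ (t : R) u : enorm (t *: u) = `|t| * enorm u.
Proof.
rewrite /enorm /sqnorm dotvZl dotvZr mulrA -expr2 sqrtrM ?sqr_ge0 //.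
by rewrite sqrtr_sqr.
Qed.

Lemma enormN u : enorm (- u) = enorm u.
Proof. by rewrite -scaleN1r enormZ normrN normr1 mul1r. Qed.

Lemma sqnormN u : sqnorm (- u) = sqnorm u.
Proof. by rewrite /sqnorm dotvNl dotvNr opprK. Qed.

Lemma sqnormD u v : sqnorm (u + v) = sqnorm u + 2 * dotv u v + sqnorm v.
Proof. rewrite /sqnorm !(dotvDl, dotvDr) (dotvC v u); ring. Qed.

Lemma sqnormB u v : sqnorm (u - v) = sqnorm u - 2 * dotv u v + sqnorm v.
Proof. by rewrite sqnormD sqnormN dotvNr mulrN. Qed.

Lemma sqnormZ (t : R) u : sqnorm (t *: u) = t ^+ 2 * sqnorm u.
Proof. by rewrite /sqnorm dotvZl dotvZr mulrA expr2. Qed.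

End Vec.

Section Ana.
Variables (R : realType) (d : nat).
Local Notation vec := 'rV[R]_d.

Lemma line_deriv (f : vec -> R) (g : vec -> vec) : is_gradient f g ->
  forall (x h : vec) (t : R),
  is_derive t 1 (fun s : R => f (x + s *: h)) (dotv (g (x + t *: h)) h).
Proof.
move=> Hg x h t.
set a := x + t *: h.
have [df dfE] := Hg a.
have E : (fun s : R => s^-1 *: (((fun s => f (x + s *: h)) \o shift t) (s *: 1) - f (x + t *: h)))
   = (fun s => s^-1 *: ((f \o shift a) (s *: h) - f a)).
  apply/funext => s /=; congr (_ *: (f _ - _)).
  rewrite /a /shift /= -[s *: 1]/(s * 1) mulr1 scalerDl; rewrite addrC -addrA (addrC (t *: h)).
  by [].
split.
  rewrite /derivable E; exact: diff_derivable.
rewrite /derive E -/(derive f a h) deriveE // dfE //.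
Qed.


Lemma psi_deriv (f : vec -> R) (g : vec -> vec) : is_gradient f g ->
  forall (x h : vec) (A B t : R),
  is_derive t 1 (fun s : R => f (x + s *: h) - s * A - s ^+ 2 * B)
     (dotv (g (x + t *: h)) h - A - 2 * t * B).
Proof.
move=> Hg x h A B t.
have d1 := line_deriv Hg x h t.
have -> : (fun s : R => f (x + s *: h) - s * A - s ^+ 2 * B) =
  ((fun s : R => f (x + s *: h)) - (@id R * cst A) - ((@id R) ^+ 2 * cst B)).
  by apply/funext => s /=.
apply: is_derive_eq.
rewrite !scaler0 !add0r expr1 -[A%:A]/(A * 1) -[B *: _]/(B * _) -[(2 * t)%:A]/(2 * t * 1); ring.
Qed.


Lemma mvt_all (psi dpsi : R -> R) (a b : R) : a < b ->
  (forall t : R, is_derive t 1 psi (dpsi t)) ->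
  exists2 c, c \in `]a, b[%R & psi b - psi a = dpsi c * (b - a).
Proof.
move=> ab H; apply: MVT => //.
apply: derivable_within_continuous; move=> t0 t0ab.
by case: (H t0).
Qed.

Lemma lip_dot (g : vec -> vec) (L : R) : lipschitz_mod g L ->
  forall x y h : vec, dotv (g x - g y) h <= L * enorm (x - y) * enorm h.
Proof.
move=> Hl x y h; apply: le_trans (cauchy_schwarz _ _) _.
by apply: ler_wpM2r; [exact: enorm_ge0|exact: Hl].
Qed.

Lemma descent (f : vec -> R) (g : vec -> vec) (L : R) :
  is_gradient f g -> lipschitz_mod g L -> 0 < L ->
  forall x y : vec, f y <= f x + dotv (g x) (y - x) + L / 2 * sqnorm (y - x).
Proof.
move=> Hg Hl L0 x y.
set h := y - x; set A := dotv (g x) h; set B := L / 2 * sqnorm h.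
have [c /andP [c0 c1] E] := mvt_all ltr01 (psi_deriv Hg x h A B).
move: E; rewrite subr0 mulr1 scale1r scale0r addr0 mul0r expr0n /= mul0r !subr0.
have -> : x + h = y by rewrite /h addrC subrK.
have hc : dotv (g (x + c *: h)) h - A <= 2 * c * B.
  rewrite /A -dotvBl.
  apply: le_trans (lip_dot Hl _ _ _) _.
  rewrite addrC addKr enormZ (ger0_norm (ltW c0)) /B -enorm_sq.
  suff -> : 2 * c * (L / 2 * enorm h ^+ 2) = L * (c * enorm h) * enorm h by []. 
  by rewrite expr2; field.
rewrite expr1n mul1r mul1r => E.
have : f y - A - B - f x <= 0 by rewrite E; lra.
rewrite /A /B /h; lra.
Qed.

Lemma aux_small (a K : R) : 0 <= K -> (forall t : R, 0 < t -> t <= 1 -> a <= t * K) -> a <= 0.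
Proof.
move=> K0 H; rewrite leNgt; apply/negP => a0.
have t0 : 0 < a / (K + a) by rewrite divr_gt0 // ltr_wpDl.
have t1 : a / (K + a) <= 1 by rewrite ler_pdivrMr ?ltr_wpDl // mul1r lerDr.
have := H _ t0 t1.
have KA : 0 < K + a by rewrite ltr_wpDl.
rewrite mulrAC ler_pdivlMr // => h.
have : a * (K + a) <= a * K by [].
nra.
Qed.

Lemma convex_grad (f : vec -> R) (g : vec -> vec) (L : R) :
  convex_fun f -> is_gradient f g -> lipschitz_mod g L -> 0 < L ->
  forall x y : vec, f x + dotv (g x) (y - x) <= f y.
Proof.
move=> Hc Hg Hl L0 x y.
set h := y - x.
suff : dotv (g x) h - (f y - f x) <= 0 by lra.
apply: (@aux_small _ (L * sqnorm h)); first by apply: mulr_ge0; [exact: ltW|exact: sqnorm_ge0].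
move=> t t0 t1.
have [c /andP [c0 ct] E] := mvt_all t0 (line_deriv Hg x h).
move: E; rewrite scale0r addr0 subr0 => E.
have cv : f (x + t *: h) <= t * f y + (1 - t) * f x.
  have := Hc y x t; rewrite ltW ?t1 //= => /(_ isT).
  suff -> : t *: y + (1 - t) *: x = x + t *: h by [].
  by rewrite /h scalerBr scalerBl scale1r addrCA.
have hc : dotv (g x) h - dotv (g (x + c *: h)) h <= L * c * sqnorm h.
  rewrite -dotvBl.
  apply: le_trans (lip_dot Hl _ _ _) _.
  rewrite opprD addrA subrr add0r enormN enormZ (ger0_norm (ltW c0)) -enorm_sq.
  have := enorm_ge0 h; nra.
have hct : L * c * sqnorm h <= L * t * sqnorm h.
  apply: ler_wpM2r; [exact: sqnorm_ge0|]; rewrite ler_pM2l //; exact: ltW.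
have : t * dotv (g (x + c *: h)) h <= t * (f y - f x) by rewrite mulrC -E; lra.
rewrite ler_pM2l // => h2.
lra.
Qed.

End Ana.

Section Ana2.
Variables (R : realType) (d : nat).
Local Notation vec := 'rV[R]_d.
Variables (f : vec -> R) (g : vec -> vec) (L : R).
Hypotheses (Hc : convex_fun f) (Hg : is_gradient f g) (Hl : lipschitz_mod g L) (L0 : 0 < L).

Lemma strong_ineq x y :
  f x + dotv (g x) (y - x) + sqnorm (g y - g x) / (2 * L) <= f y.
Proof.
set e := g y - g x.
set Li := L^-1.
set w := y - Li *: e.
have C := convex_grad Hc Hg Hl L0 x w.
have D := descent Hg Hl L0 y w.
have E1 : w - x = (y - x) - Li *: e by rewrite /w addrAC.
have E2 : w - y = - (Li *: e) by rewrite /w addrC addKr.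
rewrite E1 E2 dotvBr dotvZr dotvNr dotvZr sqnormN /sqnorm dotvZl dotvZr in C D.
have Se : sqnorm e = dotv (g y) e - dotv (g x) e by rewrite /sqnorm /e dotvBl (dotvC (g y)) (dotvC (g x)).
have LLi : L * Li = 1 by rewrite /Li mulfV // gt_eqF.
have -> : sqnorm e / (2 * L) = Li * sqnorm e / 2.
  by rewrite /Li; field; rewrite gt_eqF.
rewrite -/(sqnorm e) in D.
have : L / 2 * (Li * (Li * sqnorm e)) = Li * sqnorm e / 2.
  by rewrite /Li; field; rewrite gt_eqF.
move=> h; rewrite h in D.
rewrite Se in D *.
lra.
Qed.

Lemma monotone x y : 0 <= dotv (x - y) (g x - g y).
Proof.
have C1 := convex_grad Hc Hg Hl L0 x y.
have C2 := convex_grad Hc Hg Hl L0 y x.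
rewrite dotvBl !dotvBr (dotvC x) (dotvC y) (dotvC x (g y)) (dotvC y (g y)).
rewrite !dotvBr in C1 C2.
lra.
Qed.

Lemma lip_sq x y : sqnorm (g x - g y) <= L ^+ 2 * sqnorm (x - y).
Proof.
rewrite -!enorm_sq -exprMn.
have := Hl x y; have := enorm_ge0 (g x - g y); have := enorm_ge0 (x - y).
rewrite !expr2; nra.
Qed.

Lemma lip_dotsq x y : dotv (x - y) (g x - g y) <= L * sqnorm (x - y).
Proof.
apply: le_trans (cauchy_schwarz _ _) _.
rewrite -enorm_sq; have := Hl x y; have := enorm_ge0 (x - y).
rewrite !expr2; nra.
Qed.

Lemma prox_opt (gam : R) (z x : vec) : 0 < gam ->
  x \in prox (fun x => (f x)%:E) gam z -> z - x = gam *: g x.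
Proof.
move=> g0 /set_mem Hx.
set v := g x + gam^-1 *: (x - z).
suff v0 : v = 0.
  have : gam *: v = 0 by rewrite v0 scaler0.
  rewrite /v scalerDr scalerA mulfV ?gt_eqF // scale1r => /eqP.
  rewrite addr_eq0 => /eqP ->; by rewrite opprB.
apply: sqnorm_eq0; apply/eqP; rewrite eq_le sqnorm_ge0 andbT.
set K := (L / 2 + 1 / (2 * gam)) * sqnorm v.
apply: (@aux_small _ _ K).
  rewrite /K mulr_ge0 ?sqnorm_ge0 // addr_ge0 // ?divr_ge0 ?mulr_ge0 //; try exact: ltW.
move=> t t0 t1.
have H := Hx (x - t *: v).
rewrite -!EFinD lee_fin in H.
have D := descent Hg Hl L0 x (x - t *: v).
have E1 : x - t *: v - x = - (t *: v) by rewrite addrAC subrr add0r.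
have E2 : x - t *: v - z = (x - z) - t *: v by rewrite addrAC.
rewrite E1 in D; rewrite E2 in H.
rewrite dotvNr dotvZr sqnormN sqnormZ in D.
rewrite (sqnormB (x - z) (t *: v)) dotvZr sqnormZ in H.
have Ev : sqnorm v = dotv (g x) v + gam^-1 * dotv (x - z) v.
  by rewrite /sqnorm {1}/v dotvDl dotvZl.
have e2 : forall q : R, q / (2 * gam) = gam^-1 / 2 * q.
  by move=> q; rewrite invfM; ring.
rewrite !e2 in H.
rewrite /K div1r invfM (mulrC 2^-1).
set gi := gam^-1 in H Ev *.
set a := dotv (g x) v in D Ev.
set b := dotv (x - z) v in H Ev.
set c := sqnorm v in H D Ev *.
rewrite Ev.
have gi0 : 0 < gi by rewrite invr_gt0.
rewrite !expr2 in H D.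
have : t * (a + gi * b) <= t * (t * ((L / 2 + gi / 2) * (a + gi * b))).
  rewrite -Ev. nra.
by rewrite ler_pM2l.
Qed.


Lemma prox_pt_eq (gam : R) (z x : vec) : 0 < gam ->
  x \in prox (fun x => (f x)%:E) gam z -> prox_pt f gam z = x.
Proof.
move=> g0 Hx; rewrite /prox_pt.
apply: xget_unique; first exact: set_mem.
move=> y Hy.
have Ex := prox_opt g0 Hx.
have Ey := prox_opt g0 (mem_set Hy).
have E : y - x = gam *: (g x - g y).
  by rewrite scalerBr -Ex -Ey opprB [RHS]addrC [RHS]addrA subrK.
have M := monotone y x.
have : sqnorm (y - x) <= 0.
  have e : dotv (y - x) (g x - g y) = - dotv (y - x) (g y - g x) by rewrite -dotvNr opprB.
  rewrite {1}/sqnorm {2}E dotvZr e mulrN oppr_le0.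
  by apply: mulr_ge0 => //; exact: ltW.
move=> h; apply/eqP; rewrite -subr_eq0; apply/eqP; apply: sqnorm_eq0.
by apply/eqP; rewrite eq_le h sqnorm_ge0.
Qed.

End Ana2.

Section Core.
Variable R : realType.

Lemma young_div (e a c b : R) : 0 < e -> 0 <= e ^+ 2 * a + 2 * e * c + b ->
  - (e * a + b / e) / 2 <= c.
Proof.
move=> e0 h; rewrite -(ler_pM2l e0).
have -> : e * (- (e * a + b / e) / 2) = - (e ^+ 2 * a + b) / 2.
  by field; rewrite gt_eqF.
lra.
Qed.

Lemma core_scalar (lam al g L1 L2 e1 e2 a11 a22 b11 b22 c11 c22 c12 m12 : R) :
  0 < lam -> 0 < al -> al < 1 -> 0 < g -> 0 < L1 -> 0 < L2 -> 0 < e1 -> 0 < e2 ->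
  g <= lam / (2 * L1) -> g <= lam / (2 * L2) - al / (2 * e2) ->
  0 <= b11 -> 0 <= b22 -> 0 <= c11 -> c11 <= L1 * a11 -> 0 <= c22 -> c22 <= L2 * a22 ->
  - (e1 * a11 + a22 / e1) / 2 <= - m12 ->
  - (e2 * a11 + b22 / e2) / 2 <= c12 ->
  (al * (2 - lam) / (2 * g) - (1 - al) * L1 - al * e2 / 2 - (1 - al) * al * e1 / (2 * g)) * a11
  + ((1 - al) * (e1 * (2 * al - lam) - al) / (2 * g * e1) - al * L2) * a22
  <= a11 * (al * (2 - lam) / (2 * g)) + c11 * (al - 1) + b11 * (lam / (2 * L1) - g)
   + (b22 * (lam / (2 * L2) - g) + c22 * (1 - 2 * al) + al * c12
      + (1 - al) * al * a22 / g - (1 - al) * al * m12 / g - lam * (1 - al) * a22 / (2 * g)).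
Proof.
move=> l0 a0 a1 g0 L10 L20 e10 e20 gL1 gL2 b110 b220 c110 c11L c220 c22L Y1 Y2.
have P1 : (1 - al) * (L1 * a11 - c11) >= 0 by apply: mulr_ge0; lra.
have P2 : b11 * (lam / (2 * L1) - g) >= 0 by apply: mulr_ge0; lra.
have P3 : al * c12 >= al * (- (e2 * a11 + b22 / e2) / 2) by apply: ler_wpM2l; lra.
have P4 : b22 * (lam / (2 * L2) - g - al / (2 * e2)) >= 0 by apply: mulr_ge0; lra.
have P5 : al * (L2 * a22 - c22) >= 0 by apply: mulr_ge0; lra.
have P6 : 0 <= c22 * al by apply: mulr_ge0; lra.
have P7 : (1 - al) * al / g * (- m12) >= (1 - al) * al / g * (- (e1 * a11 + a22 / e1) / 2).
  apply: ler_wpM2l => //; apply: divr_ge0; [apply: mulr_ge0|]; lra.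
have E1 : al / (2 * e2) * b22 = al * (b22 / e2) / 2 by field; rewrite !gt_eqF.
have E2 : (1 - al) * (e1 * (2 * al - lam) - al) / (2 * g * e1) * a22
   = (1 - al) * al / g * a22 - lam * (1 - al) * a22 / (2 * g) - (1 - al) * al / g * (a22 / e1) / 2.
  by field; rewrite !gt_eqF.
have E3 : (1 - al) * al * e1 / (2 * g) * a11 = (1 - al) * al / g * (e1 * a11) / 2.
  by field; rewrite !gt_eqF.
have E4 : (1 - al) * al * m12 / g = (1 - al) * al / g * m12 by field; rewrite !gt_eqF.
have E5 : (1 - al) * al * a22 / g = (1 - al) * al / g * a22 by field; rewrite !gt_eqF.
rewrite E4 E5.
nra.
Qed.

End Core.

Definition rr (R : realType) (d : nat) (f1 f2 : 'rV[R]_d -> R) (g1 g2 : 'rV[R]_d -> 'rV[R]_d)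
  (gam alpha : R) (x1 x2 y : 'rV[R]_d) : R :=
  f1 x1 + dotv (y - x1) (g1 x1) + sqnorm (y - x1) / (2 * (gam / alpha))
       + (f2 x2 + dotv (y - x2) (g2 x2) + sqnorm (y - x2) / (2 * (gam / (1 - alpha)))).

Section VCore.
Variables (R : realType) (d : nat).
Local Notation vec := 'rV[R]_d.

Lemma sqnormD_le (u v : vec) : sqnorm (u + v) <= 2 * sqnorm u + 2 * sqnorm v.
Proof.
have := sqnorm_ge0 (u - v); rewrite sqnormB sqnormD; lra.
Qed.

Lemma vec_eq (u v : vec) : (forall i, u ord0 i = v ord0 i) -> u = v.
Proof. by move=> h; apply/rowP => i; have := h i; have -> : ord0 = (0 : 'I_1) by apply/val_inj. Qed.

Lemma coord (u v : vec) i : u = v -> u ord0 i = v ord0 i.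
Proof. by move=> ->. Qed.


Variables (f1 f2 : vec -> R) (g1 g2 : vec -> vec) (L1 L2 : R).
Hypotheses (Hc1 : convex_fun f1) (Hg1 : is_gradient f1 g1) (Hl1 : lipschitz_mod g1 L1) (L10 : 0 < L1).
Hypotheses (Hc2 : convex_fun f2) (Hg2 : is_gradient f2 g2) (Hl2 : lipschitz_mod g2 L2) (L20 : 0 < L2).
Variables (lam al gam e1 e2 : R).
Hypotheses (l0 : 0 < lam) (a0 : 0 < al) (a1 : al < 1) (g0 : 0 < gam) (e10 : 0 < e1) (e20 : 0 < e2).
Hypotheses (gL1 : gam <= lam / (2 * L1)) (gL2 : gam <= lam / (2 * L2) - al / (2 * e2)).

Definition k1 := al * (2 - lam) / (2 * gam) - (1 - al) * L1 - al * e2 / 2 - (1 - al) * al * e1 / (2 * gam).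
Definition k2 := (1 - al) * (e1 * (2 * al - lam) - al) / (2 * gam * e1) - al * L2.
Definition KK := 6 + 2 * gam ^+ 2 * (L1 ^+ 2 + L2 ^+ 2).
Definition MM := Num.min k1 k2 / (lam * KK).

Hypotheses (k10 : 0 < k1) (k20 : 0 < k2).

Lemma fin_step (A B C D F : R) : D <= F -> F <= C -> C <= B - A -> A + D <= B.
Proof. move=> *; lra. Qed.

Lemma KK_gt0 : 0 < KK.
Proof. rewrite /KK; apply: ltr_wpDr; last by [].
by apply: mulr_ge0; [apply: mulr_ge0; [|exact: sqr_ge0]|apply: addr_ge0; exact: sqr_ge0].
Qed.

Lemma MM_gt0 : 0 < MM.
Proof.
rewrite /MM divr_gt0 //; last by rewrite mulr_gt0 // KK_gt0.
by rewrite lt_min k10 k20.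
Qed.

Lemma vcore (z1 z2 z1' z2' p1 p2 q1 q2 u : vec) :
  z1 - p1 = gam *: g1 p1 ->
  (al^-1 *: z2 + p1) - p2 = (gam / al) *: g2 p2 ->
  z1' - q1 = gam *: g1 q1 ->
  (al^-1 *: z2' + q1) - q2 = (gam / al) *: g2 q2 ->
  z1' = z1 + lam *: (u - p1) -> z2' = z2 + lam *: (u - p2) ->
  rr f1 f2 g1 g2 gam al q1 q2 u + MM * (sqnorm (z1' - z1) + sqnorm (z2' - z2))
    <= rr f1 f2 g1 g2 gam al p1 p2 u.
Proof.
move=> O1 O2 O3 O4 S1 S2.
have O2' : forall (z p1 p2 G : vec), (al^-1 *: z + p1) - p2 = (gam / al) *: G ->
    z = al *: (p2 - p1) + gam *: G.
  move=> z pp1 pp2 G h; apply: vec_eq => i; have := coord i h; rewrite !mxE => hi.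
  have -> : z ord0 i = al * (al^-1 * z ord0 i) by rewrite mulrA mulfV ?gt_eqF ?mul1r.
  have -> : al^-1 * z ord0 i = gam / al * G ord0 i - pp1 ord0 i + pp2 ord0 i by lra.
  by field; rewrite gt_eqF.
have Z2 := O2' _ _ _ _ O2.
have Z2' := O2' _ _ _ _ O4.
set d1 := q1 - p1; set d2 := q2 - p2.
set ee1 := g1 q1 - g1 p1; set ee2 := g2 q2 - g2 p2.
have W1 : lam *: (u - p1) = d1 + gam *: ee1.
  apply: vec_eq => i; have := coord i O1; have := coord i O3; have := coord i S1.
  rewrite !mxE => h1 h2 h3; lra.
have W2 : lam *: (u - p2) = al *: (d2 - d1) + gam *: ee2.
  apply: vec_eq => i; have := coord i Z2; have := coord i Z2'; have := coord i S2.
  rewrite !mxE => h1 h2 h3; lra.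
set X1 := dotv (u - p1) ee1; set Y1 := dotv (u - p1) d1.
set X2 := dotv (u - p2) ee2; set Y2 := dotv (u - p2) d2.
set a11 := sqnorm d1; set a22 := sqnorm d2; set b11 := sqnorm ee1; set b22 := sqnorm ee2.
set c11 := dotv d1 ee1; set c22 := dotv d2 ee2; set c12 := dotv d1 ee2; set m12 := dotv d1 d2.
have hX1 : lam * X1 = c11 + gam * b11 by rewrite /X1 -dotvZl W1 dotvDl dotvZl.
have hY1 : lam * Y1 = a11 + gam * c11 by rewrite /Y1 -dotvZl W1 dotvDl dotvZl (dotvC ee1).
have hX2 : lam * X2 = al * (c22 - c12) + gam * b22.
  by rewrite /X2 -dotvZl W2 dotvDl !dotvZl dotvBl.
have hY2 : lam * Y2 = al * (a22 - m12) + gam * c22.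
  by rewrite /Y2 -dotvZl W2 dotvDl !dotvZl dotvBl (dotvC ee2).
have Uq1 : u - q1 = (u - p1) - d1 by apply: vec_eq => i; rewrite !mxE; lra.
have Uq2 : u - q2 = (u - p2) - d2 by apply: vec_eq => i; rewrite !mxE; lra.
have key1 : - X1 + b11 / (2 * L1) <=
    f1 p1 - f1 q1 + dotv (u - p1) (g1 p1) - dotv (u - q1) (g1 q1).
  have A := strong_ineq Hc1 Hg1 Hl1 L10 q1 p1.
  rewrite -(opprB (g1 q1) (g1 p1)) sqnormN -/ee1 -/b11 -(opprB q1 p1) dotvNr (dotvC _ (q1 - p1)) -/d1 in A.
  rewrite Uq1 (dotvBl (u - p1) d1).
  have -> : dotv (u - p1) (g1 q1) = dotv (u - p1) (g1 p1) + X1.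
    by rewrite /X1 -dotvDr /ee1 [g1 p1 + _]addrC subrK.
  lra.
have key2 : - X2 + b22 / (2 * L2) <=
    f2 p2 - f2 q2 + dotv (u - p2) (g2 p2) - dotv (u - q2) (g2 q2).
  have A := strong_ineq Hc2 Hg2 Hl2 L20 q2 p2.
  rewrite -(opprB (g2 q2) (g2 p2)) sqnormN -/ee2 -/b22 -(opprB q2 p2) dotvNr (dotvC _ (q2 - p2)) -/d2 in A.
  rewrite Uq2 (dotvBl (u - p2) d2).
  have -> : dotv (u - p2) (g2 q2) = dotv (u - p2) (g2 p2) + X2.
    by rewrite /X2 -dotvDr /ee2 [g2 p2 + _]addrC subrK.
  lra.
have Q1 : sqnorm (u - q1) = sqnorm (u - p1) - 2 * Y1 + a11 by rewrite Uq1 sqnormB.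
have Q2 : sqnorm (u - q2) = sqnorm (u - p2) - 2 * Y2 + a22 by rewrite Uq2 sqnormB.
set LB := (- X1 + b11 / (2 * L1)) + (- X2 + b22 / (2 * L2))
   + al / gam * (2 * Y1 - a11) / 2 + (1 - al) / gam * (2 * Y2 - a22) / 2.
have LBh : LB <= rr f1 f2 g1 g2 gam al p1 p2 u - rr f1 f2 g1 g2 gam al q1 q2 u.
  rewrite /rr Q1 Q2.
  have EQ : forall (c s : R), c != 0 -> s / (2 * (gam / c)) = c / gam * s / 2.
    by move=> c s c0; field; rewrite c0 gt_eqF.
  rewrite !EQ ?gt_eqF // ?subr_gt0 //.
  rewrite /LB; lra.
have eX1 : X1 = (c11 + gam * b11) / lam by rewrite -hX1; field; rewrite gt_eqF.
have eY1 : Y1 = (a11 + gam * c11) / lam by rewrite -hY1; field; rewrite gt_eqF.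
have eX2 : X2 = (al * (c22 - c12) + gam * b22) / lam by rewrite -hX2; field; rewrite gt_eqF.
have eY2 : Y2 = (al * (a22 - m12) + gam * c22) / lam by rewrite -hY2; field; rewrite gt_eqF.
have LBeq : lam * LB =
   a11 * (al * (2 - lam) / (2 * gam)) + c11 * (al - 1) + b11 * (lam / (2 * L1) - gam)
   + (b22 * (lam / (2 * L2) - gam) + c22 * (1 - 2 * al) + al * c12
      + (1 - al) * al * a22 / gam - (1 - al) * al * m12 / gam - lam * (1 - al) * a22 / (2 * gam)).
  rewrite /LB eX1 eY1 eX2 eY2; field; rewrite !gt_eqF //.
have Yo1 : - (e1 * a11 + a22 / e1) / 2 <= - m12.
  apply: young_div => //.
  have := sqnorm_ge0 (e1 *: d1 - d2).
  by rewrite sqnormB sqnormZ dotvZl -/a11 -/a22 -/m12; lra.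
have Yo2 : - (e2 * a11 + b22 / e2) / 2 <= c12.
  apply: young_div => //.
  have := sqnorm_ge0 (e2 *: d1 + ee2).
  by rewrite sqnormD sqnormZ dotvZl -/a11 -/b22 -/c12; lra.
have CS := core_scalar l0 a0 a1 g0 L10 L20 e10 e20 gL1 gL2 (sqnorm_ge0 ee1) (sqnorm_ge0 ee2)
   (monotone Hc1 Hg1 Hl1 L10 q1 p1) (lip_dotsq Hl1 q1 p1)
   (monotone Hc2 Hg2 Hl2 L20 q2 p2) (lip_dotsq Hl2 q2 p2) Yo1 Yo2.
rewrite -LBeq -/k1 -/k2 in CS.
have Sb : sqnorm (z1' - z1) + sqnorm (z2' - z2) <= KK * (a11 + a22).
  have -> : z1' - z1 = lam *: (u - p1) by rewrite S1 addrC addKr.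
  have -> : z2' - z2 = lam *: (u - p2) by rewrite S2 addrC addKr.
  rewrite W1 W2.
  have s1 := sqnormD_le d1 (gam *: ee1).
  have s2 := sqnormD_le (al *: (d2 - d1)) (gam *: ee2).
  have s3 := sqnormD_le d2 (- d1).
  rewrite !sqnormZ sqnormN in s1 s2 s3.
  have l1 := lip_sq Hl1 q1 p1; have l2 := lip_sq Hl2 q2 p2.
  rewrite -/a11 -/a22 -/b11 -/b22 -/ee1 -/ee2 -/d1 -/d2 in s1 s2 s3 l1 l2.
  have a2 : al ^+ 2 <= 1 by rewrite expr_le1 //; apply: ltW.
  have h0 : 0 <= a11 by exact: sqnorm_ge0.
  have h0p : 0 <= a22 by exact: sqnorm_ge0.
  have gg := sqr_ge0 gam.
  have t1 : gam ^+ 2 * b11 <= gam ^+ 2 * (L1 ^+ 2 * a11) by apply: ler_wpM2l.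
  have t2 : gam ^+ 2 * b22 <= gam ^+ 2 * (L2 ^+ 2 * a22) by apply: ler_wpM2l.
  have t3 : al ^+ 2 * sqnorm (d2 - d1) <= 1 * (2 * a22 + 2 * a11).
    apply: ler_pM => //; first exact: sqr_ge0; first exact: sqnorm_ge0.
  have n1 : 0 <= gam ^+ 2 * L1 ^+ 2 * a22.
    by apply: mulr_ge0; [apply: mulr_ge0; exact: sqr_ge0| exact: sqnorm_ge0].
  have n2 : 0 <= gam ^+ 2 * L2 ^+ 2 * a11.
    by apply: mulr_ge0; [apply: mulr_ge0; exact: sqr_ge0| exact: sqnorm_ge0].
  rewrite /KK; lra.
rewrite -/d1 -/d2 -/a11 -/a22 in CS.
have MM0 := MM_gt0.
have S3 : MM * (sqnorm (z1' - z1) + sqnorm (z2' - z2)) <= MM * (KK * (a11 + a22)).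
  by apply: ler_wpM2l => //; exact: ltW.
have mk : MM * (KK * (a11 + a22)) = Num.min k1 k2 * (a11 + a22) / lam.
  have KK0 := KK_gt0.
  by rewrite /MM; field; rewrite !gt_eqF.
have mk1 : Num.min k1 k2 <= k1 by rewrite ge_min lexx.
have mk2 : Num.min k1 k2 <= k2 by rewrite ge_min lexx orbT.
have h0 : 0 <= a11 by exact: sqnorm_ge0.
have h0p : 0 <= a22 by exact: sqnorm_ge0.
have m1 : Num.min k1 k2 * (a11 + a22) <= k1 * a11 + k2 * a22.
  rewrite mulrDr; apply: lerD; apply: ler_wpM2r => //.
have m2 : Num.min k1 k2 * (a11 + a22) / lam <= LB.
  rewrite ler_pdivrMr // mulrC; lra.
apply: (fin_step S3 _ LBh); rewrite mk; exact: m2.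
Qed.

End VCore.

Section Env.
Variables (R : realType) (d : nat).
Local Notation vec := 'rV[R]_d.
Variables (f1 f2 : vec -> R) (g1 g2 : vec -> vec) (f3 : vec -> \bar R).
Variables (gam al : R).
Hypotheses (g0 : (0 < gam)%R) (a0 : (0 < al)%R) (a1 : (al < 1)%R).

Lemma rr_const (x1 x2 z1 z2 y : vec) :
  z1 - x1 = gam *: g1 x1 -> (al^-1 *: z2 + x1) - x2 = (gam / al) *: g2 x2 ->
  (rr f1 f2 g1 g2 gam al x1 x2 y - sqnorm (y - (x1 - z1 + x2 - z2)) / (2 * gam) =
  f1 x1 + f2 x2 - dotv x1 (g1 x1) - dotv x2 (g2 x2)
   + (al * sqnorm x1 + (1 - al) * sqnorm x2 - sqnorm (x1 - z1 + x2 - z2)) / (2 * gam))%R.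
Proof.
move=> O1 O2.
set w := x1 - z1 + x2 - z2.
have Wexp : w = al *: x1 + (1 - al) *: x2 - gam *: (g1 x1 + g2 x2).
  apply: vec_eq => i; have := coord i O1; have := coord i O2; rewrite /w !mxE => h1 h2.
  have -> : z2 ord0 i = al * (al^-1 * z2 ord0 i) by rewrite mulrA mulfV ?gt_eqF ?mul1r.
  have -> : (al^-1 * z2 ord0 i = gam / al * g2 x2 ord0 i - x1 ord0 i + x2 ord0 i)%R by lra.
  have -> : z1 ord0 i = (gam * g1 x1 ord0 i + x1 ord0 i)%R by lra.
  by field; rewrite gt_eqF.
have dw : dotv y w = (al * dotv y x1 + (1 - al) * dotv y x2 - gam * (dotv y (g1 x1) + dotv y (g2 x2)))%R.
  by rewrite Wexp dotvBr dotvDr !dotvZr dotvDr.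
rewrite /rr (sqnormB y x1) (sqnormB y x2) (sqnormB y w) !dotvBl dw.
field.
by rewrite !gt_eqF // ?subr_gt0.

Qed.


Lemma env_eq (z1 z2 x1 x2 : vec) :
  prox_pt f1 gam z1 = x1 -> prox_pt f2 (gam / al) (al^-1 *: z2 + x1) = x2 ->
  ryu_env f1 f2 f3 g1 g2 gam al z1 z2 =
  ereal_inf [set (f3 y + (rr f1 f2 g1 g2 gam al x1 x2 y)%:E)%E | y in [set: vec]].
Proof. by move=> h1 h2; rewrite /ryu_env h1 h2. Qed.

Lemma f3_fin (x3 w : vec) : proper_fun f3 -> x3 \in prox f3 gam w ->
  exists v3 : R, f3 x3 = v3%:E.
Proof.
move=> [Hn [y0 Hy0]] /set_mem P.
have := P y0.
case E: (f3 x3) => [r| |]; first by exists r.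
- case E0: (f3 y0) Hy0 => [r0| |] Hy; move=> h.
  + by move: h; rewrite -EFinD addye // leye_eq.
  + by [].
  + by have := Hn y0; rewrite E0.
- by have := Hn x3; rewrite E.
Qed.

Lemma env_lower (x1 x2 z1 z2 x3 : vec) (v3 : R) :
  proper_fun f3 ->
  z1 - x1 = gam *: g1 x1 -> (al^-1 *: z2 + x1) - x2 = (gam / al) *: g2 x2 ->
  x3 \in prox f3 gam (x1 - z1 + x2 - z2) -> f3 x3 = v3%:E ->
  forall y, ((v3 + rr f1 f2 g1 g2 gam al x1 x2 x3)%:E <= f3 y + (rr f1 f2 g1 g2 gam al x1 x2 y)%:E)%E.
Proof.
move=> [Hn _] O1 O2 /set_mem P Hv y.
have := P y; rewrite Hv.
case E: (f3 y) => [r| |].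
- rewrite -!EFinD !lee_fin => h.
  have c1 := rr_const x3 O1 O2; have c2 := rr_const y O1 O2.
  lra.
- by move=> _; rewrite leey.
- by have := Hn y; rewrite E.
Qed.

End Env.

Unset Implicit Arguments.

Theorem theorem1 (R : realType) (d : nat)
  (f1 f2 : 'rV[R]_d -> R) (g1 g2 : 'rV[R]_d -> 'rV[R]_d)
  (f3 : 'rV[R]_d -> \bar R) (L1 L2 : R)
  (lam alpha eps1 eps2 gam : R)
  (z1 z2 x1 x2 x3 : nat -> 'rV[R]_d) :
  convex_fun f1 -> convex_fun f2 ->
  is_gradient f1 g1 -> is_gradient f2 g2 ->
  0 < L1 -> 0 < L2 -> lipschitz_mod g1 L1 -> lipschitz_mod g2 L2 ->
  proper_fun f3 -> lower_semicontinuous f3 ->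
  (exists xs : 'rV[R]_d, forall y : 'rV[R]_d,
     ((f1 xs + f2 xs)%:E + f3 xs <= (f1 y + f2 y)%:E + f3 y)%E) ->
  0 < lam < 2 ->
  (2 * lam - 3 + Num.sqrt (9 - 4 * lam)) / 2 < alpha < 1 ->
  alpha / (2 * alpha - lam) < eps1 < (2 - lam) / (1 - alpha) ->
  alpha * L2 / lam < eps2 ->
  stepsize_set L1 L2 lam alpha eps1 eps2 gam ->
  (forall k, x1 k \in prox (fun x => (f1 x)%:E) gam (z1 k)) ->
  (forall k, x2 k \in prox (fun x => (f2 x)%:E) (gam / alpha)
                        (alpha^-1 *: z2 k + x1 k)) ->
  (forall k, x3 k \in prox f3 gam (x1 k - z1 k + x2 k - z2 k)) ->
  (forall k, z1 k.+1 = z1 k + lam *: (x3 k - x1 k)) ->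
  (forall k, z2 k.+1 = z2 k + lam *: (x3 k - x2 k)) ->
  exists M : R, 0 < M /\ forall k : nat,
    (ryu_env f1 f2 f3 g1 g2 gam alpha (z1 k) (z2 k) >=
     ryu_env f1 f2 f3 g1 g2 gam alpha (z1 k.+1) (z2 k.+1)
       + (M * (sqnorm (z1 k.+1 - z1 k) + sqnorm (z2 k.+1 - z2 k)))%:E)%E.
Proof.
move=> Hc1 Hc2 Hg1 Hg2 L10 L20 Hl1 Hl2 Hp _ _ /andP[l0 l2] /andP[aLo a1]
  /andP[e1lo e1hi] e2lo Hst Hx1 Hx2 Hx3 Hz1 Hz2.
move: Hst; rewrite /stepsize_set /= => -[g0 [gle glt]].
move: gle; rewrite le_min => /andP[gL1 gL2].
move: glt; rewrite !lt_min => /andP[/andP[gg2 gg3] _].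
move: aLo; set s := (X in (2 * lam - 3 + X) / 2 < _) => aLo.
have s0 : 0 <= s by exact: sqrtr_ge0.
have s2 : s ^+ 2 = 9 - 4 * lam by rewrite /s sqr_sqrtr //; lra.
have s3 : 3 - lam < s.
  rewrite ltNge; apply/negP => h.
  have h2 : s ^+ 2 <= (3 - lam) ^+ 2 by rewrite lerXn2r // ?nnegrE //; lra.
  rewrite s2 in h2; nra.
have two_al : lam < 2 * alpha by move: aLo; rewrite ltr_pdivrMr //; lra.
have a0 : 0 < alpha by lra.
have e10 : 0 < eps1.
  apply: lt_trans e1lo; apply: divr_gt0 => //; lra.
have e20 : 0 < eps2.
  apply: lt_trans e2lo; apply: divr_gt0 => //; exact: mulr_gt0.
have k10 : 0 < k1 L1 lam alpha gam eps1 eps2.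
  have Den : 0 < alpha * eps2 + 2 * (1 - alpha) * L1.
    have h1 : 0 < alpha * eps2 by exact: mulr_gt0.
    have h2 : 0 <= 2 * (1 - alpha) * L1 by apply: mulr_ge0; [apply: mulr_ge0|apply: ltW]; lra.
    lra.
  rewrite ltr_pdivlMr // in gg2.
  have -> : k1 L1 lam alpha gam eps1 eps2 =
    (alpha * (2 - lam - (1 - alpha) * eps1) - gam * (alpha * eps2 + 2 * (1 - alpha) * L1)) / (2 * gam).
    by rewrite /k1; field; rewrite gt_eqF.
  apply: divr_gt0; lra.
have k20 : 0 < k2 L2 lam alpha gam eps1.
  have Den : 0 < 2 * alpha * L2 * eps1 by rewrite !mulr_gt0.
  rewrite ltr_pdivlMr // in gg3.
  have -> : k2 L2 lam alpha gam eps1 =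
    ((1 - alpha) * (eps1 * (2 * alpha - lam) - alpha) - gam * (2 * alpha * L2 * eps1)) / (2 * gam * eps1).
    by rewrite /k2; field; rewrite !gt_eqF.
  apply: divr_gt0; first lra.
  by rewrite !mulr_gt0.
exists (MM L1 L2 lam alpha gam eps1 eps2); split; first exact: MM_gt0.
move=> k.
have ga0 : 0 < gam / alpha by exact: divr_gt0.
have p1 := prox_pt_eq Hc1 Hg1 Hl1 L10 g0 (Hx1 k).
have p2 := prox_pt_eq Hc2 Hg2 Hl2 L20 ga0 (Hx2 k).
have p1' := prox_pt_eq Hc1 Hg1 Hl1 L10 g0 (Hx1 k.+1).
have p2' := prox_pt_eq Hc2 Hg2 Hl2 L20 ga0 (Hx2 k.+1).
have O1 := prox_opt Hg1 Hl1 L10 g0 (Hx1 k).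
have O2 := prox_opt Hg2 Hl2 L20 ga0 (Hx2 k).
have O1' := prox_opt Hg1 Hl1 L10 g0 (Hx1 k.+1).
have O2' := prox_opt Hg2 Hl2 L20 ga0 (Hx2 k.+1).
rewrite (env_eq g1 g2 f3 p1 p2) (env_eq g1 g2 f3 p1' p2').
have [v3 Hv3] := f3_fin Hp (Hx3 k).
have LB := env_lower f1 f2 g0 a0 a1 Hp O1 O2 (Hx3 k) Hv3.
set S1 := [set _ | _ in _].
set S0 := [set _ | _ in _].
have low : ((v3 + rr f1 f2 g1 g2 gam alpha (x1 k) (x2 k) (x3 k))%:E <= ereal_inf S0)%E.
  apply: le_ereal_inf_tmp => _ [y _ <-]; exact: LB.
have up : (ereal_inf S1 <= (v3 + rr f1 f2 g1 g2 gam alpha (x1 k.+1) (x2 k.+1) (x3 k))%:E)%E.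
  apply: ge_ereal_inf; exists ((v3 + rr f1 f2 g1 g2 gam alpha (x1 k.+1) (x2 k.+1) (x3 k))%:E) => //.
  by exists (x3 k) => //; rewrite Hv3 EFinD.
have vc := vcore Hc1 Hg1 Hl1 L10 Hc2 Hg2 Hl2 L20 l0 a0 a1 g0 e10 e20 gL1 gL2 k10 k20
  O1 O2 O1' O2' (Hz1 k) (Hz2 k).
apply: le_trans (leeD2r _ up) _; rewrite -EFinD; apply: le_trans _ low; rewrite lee_fin.
lra.
Qed.
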